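(* Let $f_1,f_2,\ldots$ be a sequence of complex polynomials converging uniformly on every compact subset of $\mathbb{C}$ to a polynomial $f\in\mathbb{C}[X]$ which has no double roots. Then there exist $m_0$ and $\rho^{(0)}\in\mathbb{C}$ such that $\rho^{(0)}$ satisfies the converging initial condition for $f_m$ for every $m>m_0$.
   Context: A complex number $\zeta$ satisfies the converging initial condition for a polynomial $g$ if: (1) there is an open convex set $D\subseteq\mathbb{C}$ with $\zeta\in D$ and a real $L>0$ such that $|g'(z_1)-g'(z_2)|\le L|z_1-z_2|$ for all $z_1,z_2\in D$; (2) $g'(\zeta)\ne0$ and there are reals $a,b$ with $|g'(\zeta)^{-1}|\le a$, $|g'(\zeta)^{-1}g(\zeta)|\le b$ and $h=abL\le\frac12$; (3) the closed disc $\overline U=\{z\in\mathbb{C}:|z-\zeta|\le t^*\}$ with $t^*=(1-\sqrt{1-2h})/(aL)$ is contained in $D$. *)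

(* Defs.v *)
From HB Require Import structures.
From mathcomp Require Import all_boot all_order all_algebra.
From mathcomp Require Import all_classical all_reals all_analysis.
From mathcomp Require Import complex.
Set Implicit Arguments. Unset Strict Implicit. Unset Printing Implicit Defensive.
Import Order.TTheory GRing.Theory Num.Theory.
Import numFieldNormedType.Exports.
Import ComplexField.
Local Open Scope classical_set_scope.
Local Open Scope complex_scope.
Local Open Scope ring_scope.

Definition openC (R : realType) (D : set R[i]) : Prop :=
  @open ((R[i] : numFieldType) : topologicalType) D.

Definition compactC (R : realType) (K : set R[i]) : Prop :=
  @compact ((R[i] : numFieldType) : topologicalType) K.

Definition convexC (R : realType) (D : set R[i]) : Prop :=
  forall z1 z2 : R[i], D z1 -> D z2 ->
  forall t : R, 0 <= t <= 1 -> D (t%:C * z1 + (1 - t)%:C * z2).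

Definition converging_initial_condition (R : realType) (g : {poly R[i]})
    (zeta : R[i]) : Prop :=
  exists (D : set R[i]) (L : R),
    [/\ openC D, convexC D, D zeta, 0 < L &
      (forall z1 z2 : R[i], D z1 -> D z2 ->
         `|g^`().[z1] - g^`().[z2]| <= L%:C * `|z1 - z2|)] /\
      g^`().[zeta] != 0 /\
      exists a b : R,
        [/\ `|(g^`().[zeta])^-1| <= a%:C,
            `|(g^`().[zeta])^-1 * g.[zeta]| <= b%:C,
            a * b * L <= 1 / 2 &
            [set z : R[i] | `|z - zeta|
                 <= ((1 - Num.sqrt (1 - 2 * (a * b * L))) / (a * L))%:C]
              `<=` D].

Definition unif_cvg_compacts (R : realType) (f_ : nat -> {poly R[i]})
    (f : {poly R[i]}) : Prop :=
  forall K : set R[i], compactC K ->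
  forall e : R, 0 < e ->
  exists N : nat, forall m : nat, (N <= m)%N ->
  forall z : R[i], K z -> `|(f_ m).[z] - f.[z]| < e%:C.

(* Main.v *)
Require Import Defs.
From HB Require Import structures.
From mathcomp Require Import all_boot all_order all_algebra.
From mathcomp Require Import all_classical all_reals all_analysis.
From mathcomp Require Import complex.
From mathcomp Require Import ring lra zify.
From mathcomp Require Import cyclic separable cyclotomic.
Import Order.TTheory GRing.Theory Num.Theory.
Import numFieldNormedType.Exports.
Import ComplexField.
Local Open Scope classical_set_scope.
Local Open Scope complex_scope.
Local Open Scope ring_scope.

Lemma normC_real (R : realType) (x : R) : `|x%:C| = `|x|%:C.
Proof.
have [x0|x0] := leP 0 x.
  by rewrite !ger0_norm // ler0c.
rewrite !ltr0_norm // ?ltcR //.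
by rewrite -rmorphN.
Qed.

Lemma sqC_cont (R : realType) (z0 : R[i]) :
  continuous (fun p : R * R => (z0 + (p.1)%:C + 'i * (p.2)%:C : ((R[i] : numFieldType) : topologicalType))).
Proof.
move=> p; apply/cvgrPdist_lt => e e0.
have [er eE] : exists er : R, e = er%:C.
  by apply/complex_realP; rewrite gtr0_real.
subst e.
have {e0}e0 : 0 < er by rewrite -ltcR.
exists (ball p.1 (er/2), ball p.2 (er/2)).
  by split; apply: nbhsx_ballx; rewrite divr_gt0.
move=> [x y] [/= hx hy].
move: hx hy; rewrite -!ball_normE /ball_ /= => hx hy.
have -> : z0 + (p.1)%:C + 'i * (p.2)%:C - (z0 + x%:C + 'i * y%:C) = (p.1 - x)%:C + 'i * (p.2 - y)%:C.
  by rewrite !rmorphB /=; ring.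
apply: (le_lt_trans (ler_normD _ _)).
rewrite normrM normC_real normC_real.
have -> : `|'i : R[i]| = 1.
  by rewrite normc_def /= expr0n /= expr1n add0r sqrtr1.
rewrite mul1r -rmorphD ltcR.
by rewrite (splitr er) ltrD.
Qed.

Definition sqK {R : realType} (z0 : R[i]) (r : R) : set R[i] :=
  (fun p : R * R => (z0 + (p.1)%:C + 'i * (p.2)%:C : ((R[i] : numFieldType) : topologicalType)))
   @` (`[-r, r]%classic `*` `[-r, r]%classic).

Lemma sqK_compact (R : realType) (z0 : R[i]) (r : R) : compactC (sqK z0 r).
Proof.
rewrite /compactC /sqK.
apply: continuous_compact.
  apply: continuous_subspaceT; exact: sqC_cont.
by apply: compact_setX; apply: segment_compact.
Qed.

Lemma sqK_mem (R : realType) (z0 u : R[i]) (r : R) : `|u| <= r%:C -> sqK z0 r (z0 + u).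
Proof.
move=> hu.
have hre : `|complex.Re u| <= r.
  by rewrite -lecR; apply: le_trans hu; apply: normc_ge_Re.
have him : `|complex.Im u| <= r.
  rewrite -lecR; apply: le_trans hu.
  have := normc_ge_Re (u * 'i%C); rewrite ReiNIm normrN normrM.
  have -> : `|'i%C : R[i]| = 1 by rewrite normc_def /= expr0n /= expr1n add0r sqrtr1.
  by rewrite mulr1.
move: hre him; case: u {hu} => a b /= ha hb.
exists (a, b); last first.
  by rewrite /= -addrA; congr (_ + _); apply/eqP; rewrite eq_complex /=; simpc.
by split; rewrite /= in_itv /= -ler_norml.
Qed.

Lemma prim_root_existsC (R : realType) (n : nat) : (n > 0)%N -> exists z : R[i], n.-primitive_root z.
Proof.
pose p : {poly R[i]} := 'X^n - 1; have [r Dp] := closed_field_poly_normal p.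
move=> n_gt0; rewrite (monicP _) ?monicXnsubC // scale1r in Dp.
have rn1: all n.-unity_root r by apply/allP=> z; rewrite -root_prod_XsubC -Dp.
have sz_r: (n < (size r).+1)%N.
  by rewrite -(size_prod_XsubC r id) -Dp size_XnsubC.
have [|z] := hasP (has_prim_root n_gt0 rn1 _ sz_r); last by exists z.
by rewrite -separable_prod_XsubC -Dp separable_Xn_sub_1 // pnatr_eq0 -lt0n.
Qed.

Lemma geom_sum0 (F : fieldType) (x : F) (N : nat) : x ^+ N = 1 -> x != 1 ->
  \sum_(k < N) x ^+ k = 0.
Proof.
move=> xN x1; have := subrX1 x N; rewrite xN subrr => /esym/eqP.
by rewrite mulf_eq0 subr_eq0 (negbTE x1) /= => /eqP.
Qed.

Lemma prim_norm1 (R : realType) (N : nat) (w : R[i]) : (0 < N)%N -> N.-primitive_root w -> `|w| = 1.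
Proof.
move=> N0 pw; apply/eqP; rewrite -(pexpr_eq1 N0) ?normr_ge0 //.
by rewrite -normrX (prim_expr_order pw) normr1.
Qed.

Lemma coef_bound (R : realType) (q : {poly R[i]}) (N : nat) (w : R[i]) (r : R) (M : R[i]) :
  (0 < N)%N -> N.-primitive_root w -> (size q <= N)%N -> 0 < r ->
  (forall k, (k < N)%N -> `|q.[r%:C * w ^+ k]| <= M) ->
  forall j, `|q`_j| * r%:C ^+ j <= M.
Proof.
move=> N0 pw sq r0 hM j.
have M0 : 0 <= M by apply: le_trans (hM 0%N N0); exact: normr_ge0.
have [jN|jN] := leqP N j.
  by rewrite nth_default ?normr0 ?mul0r // (leq_trans sq jN).
pose S := \sum_(k < N) q.[r%:C * w ^+ k] * w ^+ (k * (N - j)).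
have SE : S = N%:R * (q`_j * r%:C ^+ j).
  rewrite /S.
  under eq_bigr => k _ do rewrite (horner_coef_wide _ sq) mulr_suml.
  rewrite exchange_big /=.
  under eq_bigr => i _.
    under eq_bigr => k _ do rewrite exprMn mulrA -mulrA -exprM -exprD -mulnDr mulnC exprM.
    rewrite -mulr_sumr.
  over.
  rewrite /= (bigD1 (Ordinal jN)) //= [X in _ + X]big1 ?addr0; last first.
    move=> i /eqP ij; rewrite geom_sum0 ?mulr0 //.
      by rewrite exprAC (prim_expr_order pw) expr1n.
    rewrite -(expr0 w) (eq_prim_root_expr pw).
    apply/negP => /eqP hm; apply: ij; apply: val_inj => /=.
    have hi := ltn_ord i.
    move: hm; rewrite mod0n.
    have [hiN|hiN] := ltnP (i + (N - j)) N.
      by rewrite modn_small // => /eqP; rewrite addn_eq0 subn_eq0 leqNgt jN andbF.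
    rewrite -(subnK hiN) modnDr modn_small; last first.
      lia.
    move=> /eqP; rewrite subn_eq0 => h.
    lia.
  rewrite subnKC ?(ltnW jN) // (prim_expr_order pw) (eq_bigr (fun _ => 1)); last by move=> *; rewrite expr1n.
  by rewrite sumr_const card_ord mulrC.
have : `|S| <= N%:R * M.
  apply: le_trans (ler_norm_sum _ _ _) _.
  rewrite mulr_natl -[X in _ *+ X]card_ord -sumr_const.
  apply: ler_sum => k _; rewrite normrM normrX (@prim_norm1 R N w N0 pw) expr1n mulr1.
  exact: hM.
rewrite SE normrM normr_nat normrM normrX normC_real (gtr0_norm r0).
by rewrite ler_pM2l // ltr0n.
Qed.

Lemma powdiff (F : numDomainType) (w1 w2 : F) : `|w1| <= 1 -> `|w2| <= 1 ->
  forall n, `|w1 ^+ n - w2 ^+ n| <= n%:R * `|w1 - w2|.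
Proof.
move=> h1 h2; elim=> [|n IH]; first by rewrite !expr0 subrr normr0 mul0r.
have -> : w1 ^+ n.+1 - w2 ^+ n.+1 = w1 * (w1 ^+ n - w2 ^+ n) + (w1 - w2) * w2 ^+ n.
  by rewrite !exprS; ring.
apply: le_trans (ler_normD _ _) _.
rewrite -natr1 (mulrDl (n%:R)) mul1r; apply: lerD.
  rewrite normrM; apply: le_trans IH; rewrite ler_piMl //.
rewrite normrM normrX; rewrite ler_piMr // exprn_ile1 //.
Qed.

Definition Lip {F : numDomainType} (q : {poly F}) : F :=
  \sum_(i < size q^`()) i%:R * `|q^`()`_i|.

Lemma Lip_ge0 {F : numDomainType} (q : {poly F}) : 0 <= Lip q.
Proof. by apply: sumr_ge0 => i _; rewrite mulr_ge0. Qed.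

Lemma lipA {F : numDomainType} (q : {poly F}) w1 w2 : `|w1| <= 1 -> `|w2| <= 1 ->
  `|q^`().[w1] - q^`().[w2]| <= Lip q * `|w1 - w2|.
Proof.
move=> h1 h2; rewrite !horner_coef -sumrB /Lip mulr_suml.
apply: le_trans (ler_norm_sum _ _ _) _; apply: ler_sum => i _.
rewrite -mulrBr normrM [i%:R * _]mulrC -mulrA ler_wpM2l //.
exact: powdiff.
Qed.

Lemma nat_bound (i : nat) : (i * i.+1 <= 2 ^ i.+1)%N.
Proof.
elim: i => // n IH.
have h := ltn_expl n (ltnSn 1).
rewrite !expnS in IH *; nia.
Qed.

Lemma geom_half (F : numFieldType) (n : nat) :
  \sum_(i < n) ((2%:R : F) ^+ i.+1)^-1 = 1 - ((2%:R : F) ^+ n)^-1.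
Proof.
elim: n => [|n IH]; first by rewrite big_ord0 expr0 invr1 subrr.
rewrite big_ord_recr /= IH.
have h2 : (2%:R : F) ^+ n != 0 by rewrite expf_neq0 // pnatr_eq0.
rewrite exprS; field.
exact: h2.
Qed.

Lemma lipB {F : numFieldType} (q : {poly F}) (M : F) :
  (forall j, `|q`_j| * (4%:R : F) ^+ j <= M) -> Lip q <= M.
Proof.
move=> hM.
have M0 : 0 <= M by apply: le_trans (hM 0%N); rewrite expr0 mulr1.
have two0 : forall k, 0 < (2%:R : F) ^+ k by move=> k; rewrite exprn_gt0 // ltr0n.
apply: (@le_trans _ _ (\sum_(i < size q^`()) M * ((2%:R : F) ^+ i.+1)^-1)).
  apply: ler_sum => i _.
  rewrite ler_pdivlMr // coef_deriv normrMn.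
  apply: le_trans (hM i.+1).
  have -> : i%:R * (`|q`_i.+1| *+ i.+1) * (2%:R : F) ^+ i.+1 =
     `|q`_i.+1| * ((i * i.+1)%:R * (2%:R ^+ i.+1)) by rewrite -mulr_natr natrM; ring.
  rewrite ler_wpM2l // -!natrX -natrM ler_nat.
  have -> : (4 ^ i.+1 = 2 ^ i.+1 * 2 ^ i.+1)%N by rewrite -expnMn.
  by rewrite leq_mul2r nat_bound orbT.
by rewrite -mulr_sumr geom_half ler_piMr // gerBl invr_ge0 ltW.
Qed.

Lemma ncE (R : realType) (z : R[i]) : `|z| = (ComplexField.Normc.normc z)%:C.
Proof. reflexivity. Qed.

Lemma le_sqrt_self (R : realType) (x : R) : 0 <= x <= 1 -> x <= Num.sqrt x.
Proof.
case/andP=> x0 x1.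
have s1 : Num.sqrt x <= 1 by rewrite -sqrtr1 ler_sqrt.
have s0 : 0 <= Num.sqrt x := sqrtr_ge0 x.
rewrite -{1}(sqr_sqrtr x0) expr2.
by rewrite ler_piMr.
Qed.

Lemma shift_horner {F : comRingType} (P : {poly F}) (z0 u : F) :
  (P \Po ('X + z0%:P)).[u] = P.[u + z0].
Proof. by rewrite horner_comp !hornerE. Qed.

Lemma shift_deriv {F : comRingType} (P : {poly F}) (z0 u : F) :
  (P \Po ('X + z0%:P))^`().[u] = P^`().[u + z0].
Proof. by rewrite deriv_comp derivD derivX derivC addr0 mulr1 horner_comp !hornerE. Qed.

Lemma lip_shift {R : realType} (P : {poly R[i]}) {z0 z1 z2 : R[i]} :
  `|z1 - z0| <= 1 -> `|z2 - z0| <= 1 ->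
  `|P^`().[z1] - P^`().[z2]| <= Lip (P \Po ('X + z0%:P)) * `|z1 - z2|.
Proof.
move=> h1 h2.
have := lipA (P \Po ('X + z0%:P)) (z1 - z0) (z2 - z0) h1 h2.
by rewrite !shift_deriv !subrK opprB addrA subrK.
Qed.

Lemma realC {R : realType} {x : R[i]} : 0 <= x -> exists y : R, 0 <= y /\ x = y%:C.
Proof.
move=> x0; have := ger0_real x0; move=> /complex_realP [y yE]; subst x.
by exists y; split => //; rewrite -ler0c.
Qed.

Theorem lemma7 (R : realType) (f_ : nat -> {poly R[i]}) (f : {poly R[i]}) :
  unif_cvg_compacts f_ f ->
  (1 < size f)%N ->
  (forall z : R[i], root f z -> f^`().[z] != 0) ->
  exists (m0 : nat) (rho0 : R[i]),
    forall m : nat, (m0 < m)%N -> converging_initial_condition (f_ m) rho0.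
Proof.
move=> hu sf hder.
have [z0 rz0] : exists z, root f z.
  by apply/closed_rootP; rewrite neq_ltn sf orbT.
have fd0 := hder _ rz0.
have [cr [cr0 crE]] := realC (normr_ge0 (f^`().[z0])).
have {cr0}cr0 : 0 < cr.
  by rewrite -ltcR -crE normr_gt0.
pose g := f \Po ('X + z0%:P).
have [Lf [Lf0 LfE]] := realC (Lip_ge0 g).
pose L := Lf + 1.
have L0 : 0 < L by rewrite /L; lra.
pose a := 2 / cr.
have a0 : 0 < a by rewrite /a divr_gt0.
have h2' : 0 < 2 * a ^+ 2 * L.
  apply: mulr_gt0 => //; apply: mulr_gt0; [lra | exact: exprn_gt0].
have h3' : 0 < 4 * a by apply: mulr_gt0 => //; lra.
pose e := Num.min (Num.min 1 (2 * cr)) (Num.min (1 / (2 * a ^+ 2 * L)) (1 / (4 * a))).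
have e0 : 0 < e.
  rewrite /e !lt_min ltr01 /=.
  have h1 : 0 < 2 * cr by lra.
  have h2 : 0 < 1 / (2 * a ^+ 2 * L) by rewrite divr_gt0.
  have h3 : 0 < 1 / (4 * a) by rewrite divr_gt0.
  by rewrite h1 h2 h3.
have e1 : e <= 1 by rewrite /e !ge_min lexx.
have e2 : e <= 2 * cr by rewrite /e !ge_min lexx orbT.
have e3 : e * (2 * a ^+ 2 * L) <= 1.
  rewrite -ler_pdivlMr //.
  by rewrite /e !ge_min lexx !orbT.
have e4 : e * (4 * a) <= 1.
  rewrite -ler_pdivlMr //.
  by rewrite /e !ge_min lexx !orbT.
have [N0 hN0] := hu _ (sqK_compact R z0 4) e e0.
exists N0, z0 => m hm.
have hK : forall u : R[i], `|u| <= (4:R)%:C -> `|(f_ m).[z0 + u] - f.[z0 + u]| < e%:C.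
  move=> u hu4; apply: hN0; first exact: ltnW.
  exact: sqK_mem.
pose p := f_ m - f.
pose q := p \Po ('X + z0%:P).
have hq : forall u, `|u| <= (4:R)%:C -> `|q.[u]| <= e%:C.
  move=> u hu4; rewrite shift_horner /p hornerD hornerN (addrC u z0).
  exact: ltW (hK u hu4).
have [w pw] := @prim_root_existsC R (size q).+1 (ltn0Sn (size q)).
have hc : forall j, `|q`_j| * (4:R)%:C ^+ j <= e%:C.
  apply: (@coef_bound R q (size q).+1 w 4 e%:C (ltn0Sn _) pw (leqnSn _)).
    by rewrite ltr0n.
  move=> k _; apply: hq.
  rewrite normrM normC_real normrX (@prim_norm1 R (size q).+1 w (ltn0Sn _) pw).
  by rewrite expr1n mulr1 ger0_norm // ler0n.
have hLq : Lip q <= e%:C.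
  by apply: lipB => j; have := hc j; rewrite rmorph_nat.
have hq1 : `|q`_1| * (4:R)%:C <= e%:C by have := hc 1%N; rewrite expr1.
have dE : (f_ m)^`().[z0] = f^`().[z0] + q`_1.
  have := shift_deriv p z0 0; rewrite -/q add0r horner_coef0 coef_deriv mulr1n => ->.
  by rewrite /p derivB hornerD hornerN addrC subrK.
have [dr [dr0 drE]] := realC (normr_ge0 ((f_ m)^`().[z0])).
have [qr [qr0 qrE]] := realC (normr_ge0 (q`_1)).
have hdq : cr <= dr + qr.
  rewrite -lecR rmorphD /= -crE -drE -qrE.
  have -> : f^`().[z0] = (f_ m)^`().[z0] - q`_1 by rewrite dE addrK.
  by apply: le_trans (ler_normB _ _) _.
have hqr : qr * 4 <= e by rewrite -lecR rmorphM /= -qrE.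
have hdr : cr / 2 <= dr by lra.
have dr0' : 0 < dr by lra.
have d0 : (f_ m)^`().[z0] != 0 by rewrite -normr_gt0 drE ltcR.
have hfm0 : `|(f_ m).[z0]| <= e%:C.
  have := hq 0; rewrite normr0 ler0c ler0n => /(_ isT).
  rewrite shift_horner add0r /p hornerD hornerN (rootP rz0) subr0.
  done.
exists [set z | `|z - z0| < 1], L.
split.
  split.
  - rewrite /openC.
    have -> : [set z | `|z - z0| < 1] = ball (z0 : (R[i] : numFieldType)) 1.
      rewrite -ball_normE; apply/seteqP; split => z /=; by rewrite distrC.
    exact: ball_open.
  - move=> z1 z2 /= h1 h2 t /andP[t0 t1].
    have -> : t%:C * z1 + (1 - t)%:C * z2 - z0 = t%:C * (z1 - z0) + (1 - t)%:C * (z2 - z0).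
      by rewrite rmorphB rmorph1 /=; ring.
    apply: le_lt_trans (ler_normD _ _) _.
    have t1' : 0 <= 1 - t by rewrite subr_ge0.
    rewrite !normrM !normC_real (ger0_norm t0) (ger0_norm t1').
    move: h1 h2; rewrite !ncE -!rmorphM -rmorphD /= -(rmorph1 (real_complex R)) !ltcR => h1 h2.
    have n1 : 0 <= ComplexField.Normc.normc (z1 - z0) by rewrite -ler0c -ncE normr_ge0.
    have n2 : 0 <= ComplexField.Normc.normc (z2 - z0) by rewrite -ler0c -ncE normr_ge0.
    set n1' := Normc.normc (z1 - z0) in h1 n1 *.
    set n2' := Normc.normc (z2 - z0) in h2 n2 *.
    pose mm := Num.min (1 - n1') (1 - n2').
    have hm0 : 0 < mm by rewrite /mm lt_min; apply/andP; split; lra.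
    have hm1 : mm <= 1 - n1' by rewrite /mm ge_min lexx.
    have hm2 : mm <= 1 - n2' by rewrite /mm ge_min lexx orbT.
    have k1 : 0 <= 1 - n1' - mm by rewrite subr_ge0.
    have k2 : 0 <= 1 - n2' - mm by rewrite subr_ge0.
    have := mulr_ge0 t0 k1.
    have := mulr_ge0 t1' k2.
    nra.
  - by rewrite /= subrr normr0 ltr01.
  - exact: L0.
  - move=> z1 z2 /= h1 h2.
    have k1 := ltW h1; have k2 := ltW h2.
    have hfm : forall z, (f_ m)^`().[z] = f^`().[z] + p^`().[z].
      by move=> z; rewrite /p derivB hornerD hornerN addrC subrK.
    rewrite !hfm opprD addrACA.
    apply: le_trans (ler_normD _ _) _.
    apply: le_trans (lerD (lip_shift f k1 k2) (lip_shift p k1 k2)) _.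
    rewrite -mulrDl ler_wpM2r // -/g LfE /L.
    apply: (@le_trans _ _ (Lf%:C + e%:C)); first by rewrite lerD2l.
    by rewrite -rmorphD lecR lerD2l.
split; first exact: d0.
exists a, (a * e); split.
- rewrite normfV drE -fmorphV lecR /a -invf_div lef_pV2 ?posrE //.
  by rewrite divr_gt0.
- rewrite normrM normfV drE -fmorphV rmorphM /=.
  apply: ler_pM => //; first by rewrite ler0c invr_ge0.
  rewrite lecR /a -invf_div lef_pV2 ?posrE //.
  by rewrite divr_gt0.
- lra.
- move=> z /= hz; apply: le_lt_trans hz _.
  rewrite -(rmorph1 (real_complex R)) ltcR.
  set h := a * (a * e) * L.
  have h0 : 0 <= h.
    by rewrite /h; apply: mulr_ge0; [apply: mulr_ge0; [exact: ltW | apply: mulr_ge0; exact: ltW] | exact: ltW].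
  have hh : h <= 1 / 2 by rewrite /h; lra.
  have hs := @le_sqrt_self R (1 - 2 * h).
  have aL0 : 0 < a * L by rewrite mulr_gt0.
  rewrite ltr_pdivrMr // mul1r.
  have hae : 0 < 1 - 2 * a * e by lra.
  have := mulr_gt0 aL0 hae.
  have : 1 - 2 * h <= Num.sqrt (1 - 2 * h) by apply: hs; lra.
  rewrite /h; lra.
Qed.
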